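(* Let $X$ be one of $\mathbb{R}^n$, $\mathbb{S}^n$, or $\mathbb{H}^n$ with its standard metric. Then $X$ is Brillouin, i.e.: (1) $X$ is metrically consistent; (2) for all distinct $a,b\in X$ the mediatrix $L_{ab}$ is minimally separating; (3) for any three distinct points $0,a,b\in X$, the mediatrices $L_{0a}$ and $L_{0b}$ are topologically transversal.
   Context: For a metric space $(X,d)$: $N_r(x)=\{y: d(x,y)<r\}$, $C_r(x)=\{y: d(x,y)=r\}$. For $a\ne b$, the mediatrix is $L_{ab}=\{x: d(x,a)=d(x,b)\}$, with $L_{ab}^-=\{x: d(a,x)-d(b,x)<0\}$ and $L_{ab}^+=\{x: d(a,x)-d(b,x)>0\}$. $X$ is metrically consistent if for all $x\in X$, all $R>r>0$ and each $a\in C_R(x)$ there is $z\in C_r(x)$ with $N_{d(z,a)}(z)\subseteq N_R(x)$ and $C_{d(z,a)}(z)\cap C_R(x)=\{a\}$. A set $L\subseteq X$ separating $X$ is minimally separating if for every proper subset $\tilde L\subsetneq L$, $X\setminus \tilde L$ is connected. Two minimally separating mediatrices $L_{0a},L_{0b}$ are topologically transversal if they are disjoint, or if for every $x\in L_{0a}\cap L_{0b}$ and every neighborhood $V$ of $x$ the four sets $L_{0a}^{\pm}\cap L_{0b}^{\pm}\cap V$ (all sign combinations) are nonempty. *)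

(* Defs.v *)
From HB Require Import structures.
From mathcomp Require Import all_boot all_order all_algebra.
From mathcomp Require Import all_classical all_reals.
From mathcomp Require Import exp trigo.
Set Implicit Arguments. Unset Strict Implicit. Unset Printing Implicit Defensive.
Import Order.TTheory GRing.Theory Num.Theory.
Local Open Scope classical_set_scope.
Local Open Scope ring_scope.

Section MetricNotions.
Variables (R : realType) (X : Type) (d : X -> X -> R).

Definition mball (x : X) (r : R) : set X := [set y | d x y < r].
Definition msphere (x : X) (r : R) : set X := [set y | d x y = r].

Definition mediatrix (a b : X) : set X := [set x | d x a = d x b].
Definition mediatrix_minus (a b : X) : set X := [set x | d a x - d b x < 0].
Definition mediatrix_plus (a b : X) : set X := [set x | d a x - d b x > 0].

Definition mopen (U : set X) : Prop :=
  forall x, U x -> exists e : R, 0 < e /\ mball x e `<=` U.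
Definition mnbhd (x : X) (V : set X) : Prop :=
  exists U, mopen U /\ U x /\ U `<=` V.

Definition mconnected (S : set X) : Prop :=
  ~ (exists U V : set X, mopen U /\ mopen V /\ S `<=` U `|` V /\
       S `&` U !=set0 /\ S `&` V !=set0 /\ S `&` U `&` V = set0).

Definition separates (L : set X) : Prop := ~ mconnected (~` L).

Definition minimally_separating (L : set X) : Prop :=
  separates L /\
  forall L' : set X, L' `<=` L -> L' <> L -> mconnected (~` L').

Definition metrically_consistent : Prop :=
  forall (x : X) (Rr r : R), 0 < r -> r < Rr ->
  forall a, msphere x Rr a ->
  exists z, msphere x r z /\
    mball z (d z a) `<=` mball x Rr /\
    msphere z (d z a) `&` msphere x Rr = [set a].

Definition topologically_transversal (o a b : X) : Prop :=
  let La := mediatrix o a in let Lb := mediatrix o b in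
  La `&` Lb = set0 \/
  forall x, La x -> Lb x -> forall V, mnbhd x V ->
    mediatrix_minus o a `&` mediatrix_minus o b `&` V !=set0 /\
    mediatrix_minus o a `&` mediatrix_plus o b `&` V !=set0 /\
    mediatrix_plus o a `&` mediatrix_minus o b `&` V !=set0 /\
    mediatrix_plus o a `&` mediatrix_plus o b `&` V !=set0.

Definition Brillouin : Prop :=
  metrically_consistent /\
  (forall a b : X, a <> b -> minimally_separating (mediatrix a b)) /\
  (forall o a b : X, o <> a -> o <> b -> a <> b ->
     topologically_transversal o a b).

End MetricNotions.

Section ModelSpaces.
Variable R : realType.

Definition euclid_dist (n : nat) (x y : 'rV[R]_n) : R :=
  Num.sqrt (\sum_(i < n) (x ord0 i - y ord0 i) ^+ 2).

Definition sphere_pt (n : nat) :=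
  {x : 'rV[R]_n.+1 | \sum_(i < n.+1) x ord0 i ^+ 2 = 1}.
Definition sphere_dist (n : nat) (x y : sphere_pt n) : R :=
  acos (\sum_(i < n.+1) (proj1_sig x) ord0 i * (proj1_sig y) ord0 i).

(* hyperbolic space H^n: hyperboloid model in Minkowski space R^(1,n) *)
Definition lorentz (n : nat) (x y : 'rV[R]_n.+1) : R :=
  - (x ord0 ord0 * y ord0 ord0) +
  \sum_(i < n.+1 | i != ord0) x ord0 i * y ord0 i.
Definition arcosh (t : R) : R := ln (t + Num.sqrt (t ^+ 2 - 1)).
Definition hyp_pt (n : nat) :=
  {x : 'rV[R]_n.+1 | lorentz x x = -1 /\ 0 < x ord0 ord0}.
Definition hyp_dist (n : nat) (x y : hyp_pt n) : R :=
  arcosh (- lorentz (proj1_sig x) (proj1_sig y)).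

End ModelSpaces.

(* Main.v *)
From HB Require Import structures.
Require Import Defs.
From mathcomp Require Import all_boot all_order all_algebra.
From mathcomp Require Import all_classical all_reals exp trigo.
From mathcomp Require Import topology normedtype sequences.
From mathcomp Require Import ring lra.
Set Implicit Arguments. Unset Strict Implicit. Unset Printing Implicit Defensive.
Import Order.TTheory GRing.Theory Num.Theory.
Import numFieldNormedType.Exports.
Local Open Scope classical_set_scope.
Local Open Scope ring_scope.

Section PathConn.
Variables (R : realType) (X : Type) (d : X -> X -> R).

Definition pcont (g : R -> X) := forall t e, 0 <= t <= 1 -> 0 < e ->
  exists2 del, 0 < del & forall s, 0 <= s <= 1 -> `|s - t| < del -> d (g t) (g s) < e.

Let I01 := [set t : R | 0 <= t <= 1].

Lemma I01_connected : connected I01.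
Proof.
apply/connected_intervalP.
have -> : I01 = [set` `[(0:R), 1]] by apply/seteqP; split => t /=; rewrite in_itv.
exact: interval_is_interval.
Qed.

Definition relopen (g : R -> X) (U : set X) : set R :=
  [set t | exists2 e, 0 < e & forall s, 0 <= s <= 1 -> `|s - t| < e -> U (g s)].

Lemma relopen_open g U : open (relopen g U).
Proof.
rewrite openE => t [e e0 He].
apply/nbhs_ballP; exists (e / 2); first (simpl; lra).
move=> t' /=; rewrite -ball_normE /= => Ht'.
exists (e / 2); first by lra.
move=> s Hs Hst; apply: He => //.
have := ler_normD (s - t') (t' - t).
have -> : s - t' + (t' - t) = s - t by ring.
rewrite distrC in Ht'. lra.
Qed.

Lemma path_stays g (U V : set X) : pcont g -> mopen d U -> mopen d V ->
  (forall t, 0 <= t <= 1 -> U (g t) \/ V (g t)) ->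
  (forall t, 0 <= t <= 1 -> ~ (U (g t) /\ V (g t))) ->
  U (g 0) -> U (g 1).
Proof.
move=> gc oU oV cov dis U0.
pose B := [set t | I01 t /\ U (g t)].
have sub W : mopen d W -> forall t, I01 t -> W (g t) -> relopen g W t.
  move=> oW t It Wt; have [e [e0 He]] := oW _ Wt.
  have [del del0 Hd] := gc t e It e0.
  exists del => // s Is Hs; exact/He/Hd.
have HB : B = I01.
  apply: I01_connected.
  - by exists 0; split => //; rewrite /I01 /= lexx ler01.
  - exists (relopen g U); first exact: relopen_open.
    apply/seteqP; split => t /=.
      by move=> [It Ut]; split => //; apply: sub.
    by move=> [It [e e0 He]]; split => //; apply: He => //; rewrite subrr normr0.
  - exists (setC (relopen g V)); first by apply: open_closedC; apply: relopen_open.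
    apply/seteqP; split => t /=.
      move=> [It Ut]; split => // Vt.
      apply: (dis t It); split => //.
      by case: Vt => e e0 He; apply: He => //; rewrite subrr normr0.
    move=> [It nV]; split => //.
    case: (cov t It) => // Vt; exfalso; apply: nV; exact: sub.
have : B 1 by rewrite HB /I01 /=; lra.
by case.
Qed.

Lemma mconnected_star (S : set X) c : S c ->
  (forall y, S y -> exists g : R -> X, [/\ g 0 = y, g 1 = c,
     (forall t, 0 <= t <= 1 -> S (g t)) & pcont g]) ->
  mconnected d S.
Proof.
move=> Sc Hp [U [V [oU [oV [cov [[y [Sy Uy]] [[w [Sw Vw]] dis]]]]]]].
have dis' z : S z -> U z -> V z -> False.
  by move=> Sz Uz Vz; have : (S `&` U `&` V) z by []; rewrite dis.
have key (U' V' : set X) z : mopen d U' -> mopen d V' -> S `<=` U' `|` V' ->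
   (forall z, S z -> U' z -> V' z -> False) -> S z -> U' z -> U' c.
  move=> oU' oV' cov' dis'' Sz Uz.
  have [g [g0 g1 gS gc]] := Hp z Sz.
  rewrite -g1; apply: (path_stays gc oU' oV').
  - by move=> t It; apply: cov'; apply: gS.
  - by move=> t It [] ; apply: dis''; apply: gS.
  - by rewrite g0.
have Uc := key U V y oU oV cov dis' Sy Uy.
have Vc : V c.
  apply: (key V U w oV oU) => //.
  - by move=> z /cov [] ; [right|left].
  - by move=> z Sz Vz Uz; apply: (dis' z).
exact: (dis' c Sc Uc Vc).
Qed.

End PathConn.

Section Abstract.
Variables (R : realType) (X : Type) (d : X -> X -> R).
Hypothesis dsym : forall x y, d x y = d y x.
Hypothesis dtri : forall x y z, d x z <= d x y + d y z.
Hypothesis d0 : forall x, d x x = 0.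
Hypothesis dpos : forall x y, x <> y -> 0 < d x y.

Lemma minus_plus a b : mediatrix_plus d a b = mediatrix_minus d b a.
Proof. by apply/seteqP; split => x /=; rewrite /mediatrix_plus /mediatrix_minus /=; lra. Qed.

Lemma open_minus a b : mopen d (mediatrix_minus d a b).
Proof.
move=> x; rewrite /mediatrix_minus /= => Hx.
exists ((d b x - d a x) / 2); split; first lra.
move=> y; rewrite /mball /= => Hy.
have h1 := dtri a x y; have h2 := dtri b y x; rewrite (dsym y x) in h2; lra.
Qed.

Lemma minsep_abstract a b :
  a <> b ->
  mconnected d (mediatrix_minus d a b) -> mconnected d (mediatrix_minus d b a) ->
  (forall x, mediatrix d a b x -> forall e, 0 < e ->
      exists y, mediatrix_minus d a b y /\ d x y < e) ->
  (forall x, mediatrix d b a x -> forall e, 0 < e ->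
      exists y, mediatrix_minus d b a y /\ d x y < e) ->
  minimally_separating d (mediatrix d a b).
Proof.
move=> ab cM cP adM adP.
set L := mediatrix d a b; set M := mediatrix_minus d a b; set P := mediatrix_minus d b a.
have part x : L x \/ M x \/ P x.
  rewrite /L /M /P /mediatrix /mediatrix_minus /= !(dsym x).
  case: (ltrgtP (d a x) (d b x)) => h; [right; left|right; right|left]; lra.
have ML x : M x -> ~ L x by rewrite /L /M /mediatrix /mediatrix_minus /= !(dsym x); lra.
have PL x : P x -> ~ L x by rewrite /L /P /mediatrix /mediatrix_minus /= !(dsym x); lra.
have MP x : M x -> ~ P x by rewrite /P /M /mediatrix_minus /=; lra.
have oM : mopen d M := @open_minus a b.
have oP : mopen d P := @open_minus b a.
have Ma : M a by rewrite /M /mediatrix_minus /= d0; have := dpos (nesym ab); lra.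
have Pb : P b by rewrite /P /mediatrix_minus /= d0; have := dpos ab; lra.
have adP' x : L x -> forall e, 0 < e -> exists y, P y /\ d x y < e.
  move=> Lx; apply: adP; move: Lx; rewrite /L /mediatrix /=; lra.
split.
  move=> Hc; apply: Hc; exists M, P; do 2 split => //.
  split; first by move=> x /= nL; case: (part x) => [//|[]]; [left|right].
  split; first by exists a; split => //; apply: ML.
  split; first by exists b; split => //; apply: PL.
  apply/seteqP; split => x //= [[_ Mx] Px]; exact: (MP x).
move=> L' sub neq.
have [p [Lp nL'p]] : exists p, L p /\ ~ L' p.
  apply: contrapT => H; apply: neq; apply/seteqP; split => // x Lx.
  by apply: contrapT => nx; apply: H; exists x.
have key (U V : set X) : mopen d U -> mopen d V -> ~` L' `<=` U `|` V ->
    (forall z, ~ L' z -> U z -> V z -> False) -> U p -> ~` L' `&` V = set0.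
  move=> oU oV cov dis Up.
  have MsubL' z : M z -> ~ L' z by move=> Mz /sub; apply: ML.
  have PsubL' z : P z -> ~ L' z by move=> Pz /sub; apply: PL.
  have [e [e0 He]] := oU p Up.
  have side (S : set X) : mconnected d S -> (forall z, S z -> ~ L' z) ->
      (exists y, S y /\ d p y < e) -> S `<=` U.
    move=> cS SL [y [Sy dy]] z Sz.
    have Uy : U y by apply: He.
    case: (cov z (SL z Sz)) => // Vz; exfalso; apply: cS.
    exists U, V; do 2 split => //.
    split; first by move=> w Sw; apply: cov; apply: SL.
    split; first by exists y.
    split; first by exists z.
    apply/seteqP; split => w //= [[Sw Uw] Vw]; exact: (dis w (SL w Sw)).
  have MU := side M cM MsubL' (adM p Lp e e0).
  have PU := side P cP PsubL' (adP' p Lp e e0).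
  apply/seteqP; split => // q [nq Vq].
  case: (part q) => [Lq|[Mq|Pq]].
  - have [e' [e'0 He']] := oV q Vq.
    have [y [My dy]] := adM q Lq e' e'0.
    exact: (dis y (MsubL' y My) (MU y My) (He' y dy)).
  - exact: (dis q nq (MU q Mq) Vq).
  - exact: (dis q nq (PU q Pq) Vq).
move=> [U [V [oU [oV [cov [[y [ny Uy]] [[w [nw Vw]] dis]]]]]]].
have dis' z : ~ L' z -> U z -> V z -> False.
  by move=> nz Uz Vz; have : (~` L' `&` U `&` V) z by []; rewrite dis.
case: (cov p nL'p) => Up.
  have := key U V oU oV cov dis' Up.
  by move/seteqP => [h _]; exact: (h w (conj nw Vw)).
have := key V U oV oU (fun z nz => match cov z nz with or_introl h => or_intror h | or_intror h => or_introl h end)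
   (fun z nz Vz Uz => dis' z nz Uz Vz) Up.
by move/seteqP => [h _]; exact: (h y (conj ny Uy)).
Qed.

Theorem Brillouin_of :
  metrically_consistent d ->
  (forall a b, a <> b -> mconnected d (mediatrix_minus d a b)) ->
  (forall a b x, a <> b -> mediatrix d a b x -> forall e, 0 < e ->
      exists y, mediatrix_minus d a b y /\ d x y < e) ->
  (forall o a b, o <> a -> o <> b -> a <> b ->
     forall x, mediatrix d o a x -> mediatrix d o b x -> forall e, 0 < e ->
     forall s1 s2 : bool, exists y, d x y < e /\
       (if s1 then mediatrix_minus d o a y else mediatrix_plus d o a y) /\
       (if s2 then mediatrix_minus d o b y else mediatrix_plus d o b y)) ->
  Brillouin d.
Proof.
move=> mc conn adh tr; split => //; split.
  move=> a b ab; apply: minsep_abstract => //.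
  - exact: conn.
  - by apply: conn; exact: nesym.
  - by move=> x Lx e e0; apply: adh.
  - by move=> x Lx e e0; apply: adh => //; exact: nesym.
move=> o a b oa ob ab; right => x La Lb V [U [oU [Ux UV]]].
have [e [e0 He]] := oU x Ux.
have pt (s1 s2 : bool) : exists y, V y /\
       (if s1 then mediatrix_minus d o a y else mediatrix_plus d o a y) /\
       (if s2 then mediatrix_minus d o b y else mediatrix_plus d o b y).
  have [y [dy [h1 h2]]] := tr o a b oa ob ab x La Lb e e0 s1 s2.
  by exists y; split => //; apply/UV/He.
have [y1 [V1 [h1 h1']]] := pt true true.
have [y2 [V2 [h2 h2']]] := pt true false.
have [y3 [V3 [h3 h3']]] := pt false true.
have [y4 [V4 [h4 h4']]] := pt false false.
split; first by exists y1.
split; first by exists y2.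
split; first by exists y3.
by exists y4.
Qed.

End Abstract.


Section Forms.
Variables (R : realType) (m : nat) (w : 'I_m -> R).
Implicit Types u v z : 'rV[R]_m.

Definition bf u v := \sum_i w i * (u ord0 i * v ord0 i).

Lemma bfC u v : bf u v = bf v u.
Proof. by apply: eq_bigr => i _; rewrite mulrC [u _ _ * _]mulrC mulrC. Qed.

Lemma bfDl u v z : bf (u + v) z = bf u z + bf v z.
Proof. by rewrite /bf -big_split; apply: eq_bigr => i _ /=; rewrite !mxE; ring. Qed.

Lemma bfDr u v z : bf z (u + v) = bf z u + bf z v.
Proof. by rewrite bfC bfDl !(bfC z). Qed.

Lemma bfZl k u z : bf (k *: u) z = k * bf u z.
Proof. by rewrite /bf mulr_sumr; apply: eq_bigr => i _; rewrite !mxE; ring. Qed.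

Lemma bfZr k u z : bf z (k *: u) = k * bf z u.
Proof. by rewrite bfC bfZl bfC. Qed.

Lemma bfNl u z : bf (- u) z = - bf u z.
Proof. by rewrite -scaleN1r bfZl mulN1r. Qed.

Lemma bfNr u z : bf z (- u) = - bf z u.
Proof. by rewrite bfC bfNl bfC. Qed.

Lemma bfBl u v z : bf (u - v) z = bf u z - bf v z.
Proof. by rewrite bfDl bfNl. Qed.

Lemma bfBr u v z : bf z (u - v) = bf z u - bf z v.
Proof. by rewrite bfDr bfNr. Qed.

Lemma bf0l z : bf 0 z = 0.
Proof. by rewrite /bf big1 // => i _; rewrite mxE; ring. Qed.

Lemma bf0r z : bf z 0 = 0.
Proof. by rewrite bfC bf0l. Qed.

End Forms.

Definition bfE := (bfDl, bfDr, bfZl, bfZr, bfNl, bfNr, bfBl, bfBr, bf0l, bf0r).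

Lemma quad_CS (R : realFieldType) (A B C : R) : 0 <= B ->
  (forall t, 0 <= A + 2 * t * C + t ^+ 2 * B) -> C ^+ 2 <= A * B.
Proof.
move=> B0 H.
have A0 : 0 <= A by have := H 0; rewrite !(mul0r, mulr0, expr0n, addr0).
case: (ltrgtP B 0) => hB; first lra.
- have := H (- C / B).
  have -> : A + 2 * (- C / B) * C + (- C / B) ^+ 2 * B = A - C ^+ 2 / B.
    by field; exact: lt0r_neq0.
  move=> h; have : C ^+ 2 / B <= A by lra.
  by rewrite ler_pdivrMr.
- rewrite hB mulr0.
  case: (eqVneq C 0) => [->|Cn0]; first by rewrite expr0n.
  have := H (- (A + 1) / (2 * C)); rewrite hB mulr0 addr0.
  have -> : 2 * (- (A + 1) / (2 * C)) * C = - (A + 1) by field.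
  lra.
Qed.

Section Dot.
Variables (R : realType) (m : nat).
Implicit Types u v z p q : 'rV[R]_m.

Definition dot u v := bf (fun _ : 'I_m => 1) u v.

Lemma dotE u v : dot u v = \sum_i u ord0 i * v ord0 i.
Proof. by apply: eq_bigr => i _; rewrite mul1r. Qed.

Lemma dot_ge0 u : 0 <= dot u u.
Proof. by rewrite dotE; apply: sumr_ge0 => i _; rewrite -expr2 sqr_ge0. Qed.

Lemma dot_eq0 u : dot u u = 0 -> u = 0.
Proof.
rewrite dotE => /eqP; rewrite psumr_eq0 => [/allP H|i _]; last by rewrite -expr2 sqr_ge0.
apply/rowP => i; rewrite mxE; have := H i (mem_index_enum i).
by rewrite -expr2 sqrf_eq0 => /eqP.
Qed.

Lemma dot_gt0 u : u != 0 -> 0 < dot u u.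
Proof.
move=> u0; rewrite lt_neqAle dot_ge0 andbT; apply/eqP => h.
by move/eqP: u0; apply; apply: dot_eq0.
Qed.

Lemma dot_CS p q : dot p q ^+ 2 <= dot p p * dot q q.
Proof.
apply: quad_CS; first exact: dot_ge0.
move=> t; have := dot_ge0 (p + t *: q).
rewrite /dot !bfE (bfC _ q p); lra.
Qed.

Definition nrm u := Num.sqrt (dot u u).

Lemma nrm_ge0 u : 0 <= nrm u. Proof. exact: sqrtr_ge0. Qed.
Lemma nrm_sq u : nrm u ^+ 2 = dot u u. Proof. by rewrite sqr_sqrtr // dot_ge0. Qed.

Lemma dot_le_nrm p q : dot p q <= nrm p * nrm q.
Proof.
have h := dot_CS p q; rewrite -!nrm_sq in h.
have := mulr_ge0 (nrm_ge0 p) (nrm_ge0 q); rewrite -exprMn in h.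
set N := nrm p * nrm q in h *; set D := dot p q in h *.
case: (lerP D N) => // hD h0; nra.
Qed.

Lemma nrm_triangle p q : nrm (p + q) <= nrm p + nrm q.
Proof.
have Y0 : 0 <= nrm p + nrm q by have := nrm_ge0 p; have := nrm_ge0 q; lra.
rewrite -(ger0_norm Y0) -sqrtr_sqr {1}/nrm ler_sqrt ?sqr_ge0 //.
have := dot_le_nrm p q => h.
have hp := nrm_sq p; have hq := nrm_sq q.
rewrite /dot !bfE (bfC _ q p) -/(dot p p) -/(dot q q) -/(dot p q).
nra.
Qed.

Lemma nrmZ k u : nrm (k *: u) = `|k| * nrm u.
Proof.
by rewrite /nrm /dot !bfE mulrA -expr2 sqrtrM ?sqr_ge0 // sqrtr_sqr.
Qed.

Lemma nrmN u : nrm (- u) = nrm u.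
Proof. by rewrite /nrm /dot !bfE opprK. Qed.

Lemma nrm_eq0 u : nrm u = 0 -> u = 0.
Proof.
move=> h; apply: dot_eq0; have := nrm_sq u; rewrite h expr0n /=; by move=> <-.
Qed.

End Dot.

Section Gram.
Variables (R : realType) (m : nat) (w : 'I_m -> R).
Local Notation B := (bf w).
Implicit Types u v z p q : 'rV[R]_m.

Lemma gram_solve u v : B u u * B v v - B u v ^+ 2 != 0 ->
  forall s1 s2, exists h, [/\ B h u = s1, B h v = s2 & h = ((s1 * B v v - s2 * B u v) / (B u u * B v v - B u v ^+ 2)) *: u + ((s2 * B u u - s1 * B u v) / (B u u * B v v - B u v ^+ 2)) *: v].
Proof.
move=> D0 s1 s2.
set D := B u u * B v v - B u v ^+ 2.
exists (((s1 * B v v - s2 * B u v) / D) *: u + ((s2 * B u u - s1 * B u v) / D) *: v).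
split => //.
- rewrite !bfE (bfC w v u) /D; field => //.
- rewrite !bfE /D; field => //.
Qed.

Lemma gram_w u v : let W := B v v *: u - B u v *: v in
  B W W = B v v * (B u u * B v v - B u v ^+ 2).
Proof. by rewrite /= !bfE (bfC w v u); ring. Qed.

Lemma gram_perp u v z : B z u = 0 -> B z v = 0 -> forall a b, B z (a *: u + b *: v) = 0.
Proof. by move=> h1 h2 a b; rewrite !bfE h1 h2; ring. Qed.

Lemma collinear_false O A C K k :
  B O O = K -> B A A = K -> B C C = K ->
  O - A = k *: (O - C) -> O != A -> A != C ->
  (B O C = K -> O = C) -> O != C -> False.
Proof.
move=> hO hA hC hk nOA nAC hdef nOC.
have eA : A = (1 - k) *: O + k *: C.
  apply/rowP => i; have := congr1 (fun M : 'rV_m => M ord0 i) hk; rewrite !mxE => h.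
  lra.
have : B A A = K by [].
rewrite {1 2}eA !bfE hO hC (bfC w C O) => h.
have : 2 * k * (1 - k) * (B O C - K) = 0 by nra.
move/eqP; rewrite !mulf_eq0 subr_eq0 => /orP [/orP [/orP [|] |] |].
- by rewrite pnatr_eq0.
- move=> /eqP k0; move: hk; rewrite k0 scale0r => /eqP; rewrite subr_eq0 => /eqP h0.
  by rewrite h0 eqxx in nOA.
- move=> /eqP k1; have ek : k = 1 by lra.
  have h0 : A = C.
    apply/rowP => i; have := congr1 (fun M : 'rV_m => M ord0 i) hk.
    by rewrite ek scale1r !mxE => hh; lra.
  by rewrite h0 eqxx in nAC.
- move=> /eqP hOC; have h0 : O = C by apply: hdef; lra.
  by rewrite h0 eqxx in nOC.
Qed.

End Gram.


Lemma sqrt_ltE (R : realType) (a b : R) : 0 <= a -> 0 <= b ->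
  (Num.sqrt a < Num.sqrt b) = (a < b).
Proof.
move=> a0 b0; rewrite !ltNge ler_psqrt ?nnegrE //.

Qed.

Lemma vecP (R : realType) m (u v : 'rV[R]_m) : (forall i, u ord0 i = v ord0 i) -> u = v.
Proof. by move=> h; apply/rowP => i; apply: h. Qed.

Section Euclid.
Variables (R : realType) (n : nat).
Local Notation V := 'rV[R]_n.
Local Notation d := (@euclid_dist R n).
Local Notation Q v := (dot v v).
Implicit Types x y z a b o u v h : V.

Lemma edE x y : d x y = nrm (x - y).
Proof.
rewrite /euclid_dist /nrm dotE; congr Num.sqrt; apply: eq_bigr => i _.
by rewrite !mxE expr2.
Qed.

Lemma ed_sym x y : d x y = d y x.
Proof. by rewrite !edE -nrmN opprB. Qed.

Lemma ed_tri x y z : d x z <= d x y + d y z.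
Proof.
rewrite !edE; have -> : x - z = (x - y) + (y - z) by apply: vecP => i; rewrite !mxE; ring.
exact: nrm_triangle.
Qed.

Lemma ed0 x : d x x = 0.
Proof. by rewrite edE subrr /nrm /dot bf0l sqrtr0. Qed.

Lemma ed_pos x y : x <> y -> 0 < d x y.
Proof.
move=> xy; rewrite edE lt_neqAle nrm_ge0 andbT; apply/eqP => h.
apply: xy; have := nrm_eq0 (esym h) => /eqP; rewrite subr_eq0 => /eqP.
done.
Qed.

Lemma ed_lt x y z w : (d x y < d z w) = (Q (x - y) < Q (z - w)).
Proof. by rewrite !edE /nrm sqrt_ltE ?dot_ge0. Qed.

Lemma ed_eq x y z w : (d x y = d z w) <-> (Q (x - y) = Q (z - w)).
Proof.
rewrite !edE /nrm; split => [h|->] //.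
by apply/eqP; rewrite -eqr_sqrt ?dot_ge0 //; apply/eqP.
Qed.

(* F a b v > 0  <->  d a v < d b v *)
Definition EF a b v := Q b - Q a - 2 * dot (b - a) v.

Lemma EF_quad a b v : Q (b - v) - Q (a - v) = EF a b v.
Proof. by rewrite /EF /dot !bfE (bfC _ v b) (bfC _ v a); ring. Qed.

Lemma minus_EF a b v : mediatrix_minus d a b v <-> 0 < EF a b v.
Proof.
rewrite /mediatrix_minus /= -EF_quad; split => h.
- have : d a v < d b v by lra.
  by rewrite ed_lt subr_gt0.
- have : d a v < d b v by rewrite ed_lt -subr_gt0.
  lra.
Qed.

Lemma plus_EF a b v : mediatrix_plus d a b v <-> EF a b v < 0.
Proof.
rewrite (minus_plus d a b) minus_EF /EF.
have -> : dot (a - b) v = - dot (b - a) v by rewrite /dot -bfNl opprB.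
lra.
Qed.

Lemma med_EF a b x : mediatrix d a b x -> EF a b x = 0.
Proof.
rewrite /mediatrix /= ed_eq -EF_quad => h.
have e1 : b - x = - (x - b) by rewrite opprB.
have e2 : a - x = - (x - a) by rewrite opprB.
by rewrite e1 e2 /dot !bfNl !bfNr !opprK -/(dot (x - a) _) -/(dot (x - b) _) h subrr.
Qed.

Lemma EF_step a b x t h : EF a b (x + t *: h) = EF a b x + 2 * t * dot (a - b) h.
Proof.
rewrite /EF /dot !bfE. ring.
Qed.


Lemma Q_opp u : Q (- u) = Q u.
Proof. by rewrite /dot bfNl bfNr opprK. Qed.

Lemma nrm_pos u : u != 0 -> 0 < nrm u.
Proof. by move=> u0; rewrite /nrm sqrtr_gt0 dot_gt0. Qed.

Lemma small_t (N e : R) : 0 <= N -> 0 < e -> 0 < e / (N + 1) /\ e / (N + 1) * N < e.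
Proof.
move=> N0 e0; split; first by apply: divr_gt0; lra.
rewrite mulrC mulrA ltr_pdivrMr; last lra.
nra.
Qed.

Lemma ed_conn a b : a <> b -> mconnected d (mediatrix_minus d a b).
Proof.
move=> ab; apply: (@mconnected_star _ _ d _ a).
  apply/minus_EF; rewrite -EF_quad subrr /dot bf0l subr0 -/(dot _ _) dot_gt0 // subr_eq0.
  by apply/eqP => h; apply: ab; rewrite h.
move=> y My; exists (fun t => y + t *: (a - y)); split.
- by rewrite scale0r addr0.
- by apply: vecP => i; rewrite !mxE; ring.
- move=> t /andP [t0 t1]; apply/minus_EF; rewrite EF_step.
  move/minus_EF: My => My.
  have Ea : EF a b a = EF a b y + 2 * 1 * dot (a - b) (a - y).
    rewrite -EF_step; congr EF; apply: vecP => i; rewrite !mxE; ring.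
  have Ea0 : 0 < EF a b a.
    rewrite -EF_quad subrr /dot bf0l subr0 -/(dot _ _) dot_gt0 // subr_eq0.
    by apply/eqP => h; apply: ab; rewrite h.
  have -> : 2 * t * dot (a - b) (a - y) = t * (EF a b a - EF a b y) by rewrite Ea; ring.
  have := mulr_ge0 t0 (ltW Ea0); have : 0 <= (1 - t) * EF a b y by apply: mulr_ge0; lra.
  case: (ltrP 0 t) => ht; nra.
- move=> t e /andP [t0 t1] e0.
  have [del0 hdel] := small_t (nrm_ge0 (a - y)) e0.
  exists (e / (nrm (a - y) + 1)) => // s _ hs.
  rewrite edE; have -> : y + t *: (a - y) - (y + s *: (a - y)) = (t - s) *: (a - y).
    by apply: vecP => i; rewrite !mxE; ring.
  rewrite nrmZ distrC.
  have := nrm_ge0 (a - y); have := normr_ge0 (s - t); nra.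
Qed.

Lemma ed_adh a b x : a <> b -> mediatrix d a b x -> forall e, 0 < e ->
  exists y, mediatrix_minus d a b y /\ d x y < e.
Proof.
move=> ab Mx e e0.
have [t0 ht] := small_t (nrm_ge0 (a - b)) e0.
set t := e / (nrm (a - b) + 1) in t0 ht.
exists (x + t *: (a - b)); split.
  apply/minus_EF; rewrite EF_step med_EF //.
  have : 0 < dot (a - b) (a - b) by rewrite dot_gt0 // subr_eq0; apply/eqP.
  nra.
rewrite edE; have -> : x - (x + t *: (a - b)) = - (t *: (a - b)).
  by apply: vecP => i; rewrite !mxE; ring.
by rewrite nrmN nrmZ gtr0_norm.
Qed.

Lemma ed_transv o a b : o <> a -> o <> b -> a <> b ->
     forall x, mediatrix d o a x -> mediatrix d o b x -> forall e, 0 < e ->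
     forall s1 s2 : bool, exists y, d x y < e /\
       (if s1 then mediatrix_minus d o a y else mediatrix_plus d o a y) /\
       (if s2 then mediatrix_minus d o b y else mediatrix_plus d o b y).
Proof.
move=> oa ob ab x Ma Mb e e0 s1 s2.
set u := o - a; set v := o - b.
have Dn0 : dot u u * dot v v - dot u v ^+ 2 != 0.
  apply/eqP => D0.
  have v0 : v != 0 by rewrite subr_eq0; apply/eqP.
  have W0 := gram_w (fun _ => 1) u v.
  rewrite /= -/(dot u u) -/(dot v v) -/(dot u v) D0 mulr0 in W0.
  have := dot_eq0 W0 => /eqP; rewrite subr_eq0 => /eqP hW.
  have vv0 := dot_gt0 v0.
  have hk : u = (dot u v / dot v v) *: v.
    apply: vecP => i; have := congr1 (fun M : 'rV_n => M ord0 i) hW; rewrite !mxE => hh.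
    apply: (mulfI (lt0r_neq0 vv0)); rewrite -/(dot v v) in hh *.
    rewrite hh; field; exact: lt0r_neq0.
  have qa : Q (o - x) = Q (a - x).
    move: Ma; rewrite /mediatrix /= ed_eq => h.
    by rewrite -Q_opp opprB h -Q_opp opprB.
  have qb : Q (o - x) = Q (b - x).
    move: Mb; rewrite /mediatrix /= ed_eq => h.
    by rewrite -Q_opp opprB h -Q_opp opprB.
  apply: (@collinear_false _ _ (fun _ => 1) (o - x) (a - x) (b - x) (Q (o - x)) (dot u v / dot v v)) => //.
  - have -> : o - x - (a - x) = u by apply: vecP => i; rewrite !mxE; ring.
    have -> : o - x - (b - x) = v by apply: vecP => i; rewrite !mxE; ring.
    exact: hk.
  - by apply/eqP => h; apply: oa; apply: vecP => i; have := congr1 (fun M : 'rV_n => M ord0 i) h; rewrite !mxE => hh; lra.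
  - by apply/eqP => h; apply: ab; apply: vecP => i; have := congr1 (fun M : 'rV_n => M ord0 i) h; rewrite !mxE => hh; lra.
  - move=> hOC; have : Q ((o - x) - (b - x)) = 0.
      move: (o - x) (b - x) hOC qb => P C hOC qb'.
      rewrite /dot !bfE (bfC _ C P); rewrite /dot in hOC qb'; lra.
    move/dot_eq0 => h; apply: vecP => i; have := congr1 (fun M : 'rV_n => M ord0 i) h; rewrite !mxE => hh; lra.
  - by apply/eqP => h; apply: ob; apply: vecP => i; have := congr1 (fun M : 'rV_n => M ord0 i) h; rewrite !mxE => hh; lra.
set sg := fun s : bool => if s then 1 else -1 : R.
have [h [hu hv _]] := gram_solve Dn0 (sg s1) (sg s2).
have [t0 ht] := small_t (nrm_ge0 h) e0.
set t := e / (nrm h + 1) in t0 ht.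
exists (x + t *: h); split.
  rewrite edE; have -> : x - (x + t *: h) = - (t *: h) by apply: vecP => i; rewrite !mxE; ring.
  by rewrite nrmN nrmZ gtr0_norm.
have E1 : EF o a (x + t *: h) = 2 * t * sg s1.
  by rewrite EF_step med_EF // add0r -/u /dot bfC hu.
have E2 : EF o b (x + t *: h) = 2 * t * sg s2.
  by rewrite EF_step med_EF // add0r -/v /dot bfC hv.
split.
  by case: s1 {hu} E1; rewrite /sg => E1; [apply/minus_EF|apply/plus_EF]; rewrite E1; lra.
by case: s2 {hv} E2; rewrite /sg => E2; [apply/minus_EF|apply/plus_EF]; rewrite E2; lra.
Qed.

Lemma ed_key (r Rr : R) (U P : V) : 0 < r -> r < Rr -> Q U = Rr ^+ 2 -> Q P = Rr ^+ 2 ->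
  Q ((r / Rr) *: U - P) = (Rr - r) ^+ 2 -> P = U.
Proof.
move=> r0 rR QU QP Qz.
have R0 : Rr != 0 by apply: lt0r_neq0; lra.
move: Qz; rewrite /dot !bfE (bfC _ P U) -!/(dot _ _) QU QP => Qz.
have Dp : dot U P = Rr ^+ 2.
  have : r / Rr * dot U P = r * Rr.
    have : (r / Rr) ^+ 2 * Rr ^+ 2 = r ^+ 2 by field.
    lra.
  move=> hh; have -> : dot U P = (Rr / r) * (r / Rr * dot U P) by field; rewrite R0 lt0r_neq0.
  by rewrite hh; field; exact: lt0r_neq0.
have : Q (P - U) = 0.
  rewrite /dot !bfE (bfC _ P U) -!/(dot _ _) QU QP Dp; ring.
move/dot_eq0 => h0; apply: vecP => i; have := congr1 (fun M : 'rV_n => M ord0 i) h0.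
rewrite !mxE => hh; lra.
Qed.

Lemma ed_mc : metrically_consistent d.
Proof.
move=> x Rr r r0 rR a; rewrite /msphere /= => xa.
have R0 : 0 < Rr by lra.
have Na : nrm (a - x) = Rr by rewrite -nrmN opprB -edE.
have Qa : Q (a - x) = Rr ^+ 2 by rewrite -nrm_sq Na.
set z := x + (r / Rr) *: (a - x).
have dxz : d x z = r.
  rewrite edE; have -> : x - z = - ((r / Rr) *: (a - x)) by apply: vecP => i; rewrite !mxE; ring.
  rewrite nrmN nrmZ Na gtr0_norm; last by apply: divr_gt0.
  by field; apply: lt0r_neq0.
have dza : d z a = Rr - r.
  rewrite edE; have -> : z - a = - ((1 - r / Rr) *: (a - x)) by apply: vecP => i; rewrite !mxE; ring.
  rewrite nrmN nrmZ Na gtr0_norm.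
    by field; apply: lt0r_neq0.
  by rewrite subr_gt0 ltr_pdivrMr // mul1r.
exists z; split; first by rewrite /msphere /= dxz.
split.
  move=> y; rewrite /mball /= dza => hy.
  have := ed_tri x z y; rewrite dxz; lra.
apply/seteqP; split => y /=.
  move=> [hzy hxy]; rewrite /msphere /= dza in hzy hxy.
  have Qp : Q (y - x) = Rr ^+ 2 by rewrite -Q_opp opprB -nrm_sq -edE hxy.
  have Qz : Q (z - y) = (Rr - r) ^+ 2 by rewrite -nrm_sq -edE hzy.
  have ez : z - y = (r / Rr) *: (a - x) - (y - x) by apply: vecP => i; rewrite !mxE; ring.
  rewrite ez in Qz.
  have := ed_key r0 rR Qa Qp Qz => h0.
  apply: vecP => i; have := congr1 (fun M : 'rV_n => M ord0 i) h0.
  rewrite !mxE => hh; lra.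
move=> ->; split => //.
Qed.

Theorem euclid_brillouin : Brillouin d.
Proof.
apply: (Brillouin_of ed_sym ed_tri ed0 ed_pos).
- exact: ed_mc.
- exact: ed_conn.
- by move=> a b x ab; apply: ed_adh.
- exact: ed_transv.
Qed.

End Euclid.


Section Trig.
Variable R : realType.
Implicit Types p q u v : R.

Lemma acos_ltE p q : -1 <= p <= 1 -> -1 <= q <= 1 -> (acos p < acos q) = (q < p).
Proof.
move=> hp hq.
have ip : acos p \in `[0, pi] by rewrite in_itv /= acos_ge0 // acos_lepi.
have iq : acos q \in `[0, pi] by rewrite in_itv /= acos_ge0 // acos_lepi.
by rewrite -(ltr_cos ip iq) !acosK // in_itv /=.
Qed.

Lemma acos_inj p q : -1 <= p <= 1 -> -1 <= q <= 1 -> acos p = acos q -> p = q.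
Proof.
move=> hp hq h; have := congr1 (@cos R) h; rewrite !acosK // in_itv /=.
Qed.

Lemma cos_leE u v : 0 <= u <= pi -> 0 <= v <= pi -> (cos u <= cos v) = (v <= u).
Proof.
move=> hu hv; rewrite !leNgt; congr (~~ _); apply: ltr_cos; rewrite in_itv //=.
Qed.

Lemma acos_cos_abs u : -pi <= u <= pi -> acos (cos u) = `|u|.
Proof.
move=> hu; case: (lerP 0 u) => h.
  by rewrite ger0_norm // cosK // in_itv /=; apply/andP; split => //; case/andP: hu.
rewrite ltr0_norm // cosKN //; apply/andP; split; [by case/andP: hu|exact: ltW].
Qed.

Lemma cos_in u : -1 <= cos u <= 1.
Proof. by rewrite cos_geN1 cos_le1. Qed.

End Trig.

Section UnitVec.
Variables (R : realType) (m : nat).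
Local Notation V := 'rV[R]_m.
Local Notation Q v := (dot v v).
Implicit Types x y z w g h u v : V.

Lemma dot_sym u v : dot u v = dot v u.
Proof. exact: bfC. Qed.

Lemma unit_dot_in x y : Q x = 1 -> Q y = 1 -> -1 <= dot x y <= 1.
Proof.
move=> hx hy; have h1 := dot_ge0 (x - y); have h2 := dot_ge0 (x + y).
move: h1 h2; rewrite /dot !bfE (bfC _ y x) -!/(dot _ _) hx hy => h1 h2.
apply/andP; split; lra.
Qed.

Lemma unit_dot1 x y : Q x = 1 -> Q y = 1 -> dot x y = 1 -> x = y.
Proof.
move=> hx hy h; have : Q (x - y) = 0.
  by rewrite /dot !bfE (bfC _ y x) -!/(dot _ _) hx hy h; ring.
move/dot_eq0 => h0; apply: vecP => i; have := congr1 (fun M : V => M ord0 i) h0.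
by rewrite !mxE => hh; lra.
Qed.

Lemma sph_tri_vec x z w : Q x = 1 -> Q z = 1 -> Q w = 1 ->
  dot x z * dot z w - Num.sqrt (1 - dot x z ^+ 2) * Num.sqrt (1 - dot z w ^+ 2) <= dot x w.
Proof.
move=> hx hz hw.
set cA := dot x z; set cB := dot z w.
have e : dot (- (x - cA *: z)) (w - cB *: z) = - (dot x w - cA * cB).
  rewrite /cA /cB /dot !bfE -!/(dot _ _) hz; ring.
have := dot_le_nrm (- (x - cA *: z)) (w - cB *: z); rewrite e nrmN.
have -> : nrm (x - cA *: z) = Num.sqrt (1 - cA ^+ 2).
  rewrite /cA /nrm /dot !bfE -!/(dot _ _) ?(dot_sym z x) hz hx; congr Num.sqrt; ring.
have -> : nrm (w - cB *: z) = Num.sqrt (1 - cB ^+ 2).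
  rewrite /cB /nrm /dot !bfE -!/(dot _ _) ?(dot_sym w z) hz hw; congr Num.sqrt; ring.
lra.
Qed.

Definition arc x g (t : R) : V := cos t *: x + sin t *: g.

Lemma arc_dot x g s t : Q x = 1 -> Q g = 1 -> dot x g = 0 ->
  dot (arc x g s) (arc x g t) = cos (s - t).
Proof.
move=> hx hg hxg; rewrite /arc /dot !bfE -!/(dot _ _) ?(dot_sym g x) hx hg hxg cosB; ring.
Qed.

Lemma arc_unit x g t : Q x = 1 -> Q g = 1 -> dot x g = 0 -> Q (arc x g t) = 1.
Proof. by move=> hx hg hxg; rewrite arc_dot // subrr cos0. Qed.

Lemma arc_dotl x g c t : dot c (arc x g t) = cos t * dot c x + sin t * dot c g.
Proof. by rewrite /arc /dot !bfE. Qed.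

Lemma arc0 x g : arc x g 0 = x.
Proof. by rewrite /arc cos0 sin0 scale1r scale0r addr0. Qed.

Lemma arc_x x g t : Q x = 1 -> Q g = 1 -> dot x g = 0 -> dot x (arc x g t) = cos t.
Proof. by move=> hx hg hxg; rewrite arc_dotl hx hxg; ring. Qed.

End UnitVec.

Section UnitVec2.
Variables (R : realType) (m : nat).
Local Notation V := 'rV[R]_m.
Local Notation Q v := (dot v v).
Implicit Types x y z w g h u v a : V.

Lemma perp_of x a : Q x = 1 -> Q a = 1 -> -1 < dot x a < 1 ->
  let th := acos (dot x a) in let g := (sin th)^-1 *: (a - cos th *: x) in
  [/\ Q g = 1, dot x g = 0, arc x g th = a, 0 < th & th < pi].
Proof.
move=> hx ha hin th g.
have hin' : -1 <= dot x a <= 1 by case/andP: hin => h1 h2; apply/andP; split; lra.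
have cth : cos th = dot x a by rewrite /th acosK // in_itv.
have th0 : 0 < th by rewrite /th acos_gt0 //; case/andP: hin => h1 h2; apply/andP; split; lra.
have thpi : th < pi by rewrite /th acos_ltpi //; case/andP: hin => h1 h2; apply/andP; split; lra.
have sth : 0 < sin th by apply: sin_gt0_pi; rewrite th0 thpi.
have s2 : sin th ^+ 2 = 1 - dot x a ^+ 2 by rewrite sin2cos2 cth.
have sn0 : sin th != 0 by apply: lt0r_neq0.
split => //.
- rewrite /g /dot !bfE -!/(dot _ _) ?(dot_sym a x) hx ha cth.
  have -> : 1 - dot x a * dot x a = sin th ^+ 2 by rewrite s2 expr2.
  field => //.
- rewrite /g /dot !bfE -!/(dot _ _) hx cth; field => //.
- apply: vecP => i; rewrite /arc /g !mxE; field => //.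
Qed.

Definition evec (i : 'I_m) : V := \row_j ((j == i)%:R).

Lemma dot_evec i x : dot (evec i) x = x ord0 i.
Proof.
rewrite dotE (bigD1 i) //= big1 => [|j ji]; rewrite !mxE ?eqxx.
  by rewrite mul1r addr0.
by rewrite (negbTE ji) mul0r.
Qed.

Lemma exists_perp x : (1 < m)%N -> Q x = 1 -> exists g, Q g = 1 /\ dot x g = 0.
Proof.
move=> m1 hx.
have [i hi] : exists i, x ord0 i ^+ 2 < 1.
  have i0 : (0 < m)%N by apply: leq_trans m1.
  pose j0 : 'I_m := Ordinal i0; pose j1 : 'I_m := Ordinal m1.
  case: (ltrP (x ord0 j0 ^+ 2) 1) => h0; first by exists j0.
  exists j1.
  have : x ord0 j0 ^+ 2 + x ord0 j1 ^+ 2 <= Q x.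
    rewrite dotE (bigD1 j0) //= (bigD1 j1) //= -!expr2 addrA lerDl.
    by apply: sumr_ge0 => k _; rewrite -expr2 sqr_ge0.
  have := sqr_ge0 (x ord0 j1); lra.
set p := evec i - x ord0 i *: x.
have dxp : dot x p = 0.
  by rewrite /p /dot !bfE -!/(dot _ _) dot_sym dot_evec hx; ring.
have Qp : Q p = 1 - x ord0 i ^+ 2.
  rewrite /p /dot !bfE -!/(dot _ _) dot_evec (dot_sym x) dot_evec hx.
  by rewrite /evec mxE eqxx /=; ring.
have Qp0 : 0 < Q p by lra.
clearbody p; exists ((Num.sqrt (Q p))^-1 *: p); split.
  rewrite /dot !bfE -/(dot p p) mulrA -expr2 exprVn sqr_sqrtr; last exact: ltW.
  by rewrite mulVf //; apply: lt0r_neq0.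
by rewrite /dot bfZr -/(dot x p) dxp mulr0.
Qed.

End UnitVec2.

Section Sphere.
Variables (R : realType) (n : nat).
Local Notation X := (sphere_pt R n).
Local Notation V := 'rV[R]_n.+1.
Local Notation d := (@sphere_dist R n).
Local Notation Q v := (dot v v).
Implicit Types x y z w a b o : X.

Definition sv (x : X) : V := proj1_sig x.

Lemma unit_sum (v : V) : Q v = 1 -> \sum_(i < n.+1) v ord0 i ^+ 2 = 1.
Proof. by rewrite dotE => <-; apply: eq_bigr => i _; rewrite expr2. Qed.

Lemma sv_unit x : Q (sv x) = 1.
Proof. by rewrite dotE -(proj2_sig x); apply: eq_bigr => i _; rewrite expr2. Qed.

Lemma sv_inj x y : sv x = sv y -> x = y.
Proof.
case: x => x hx; case: y => y hy /= e; subst y; congr exist; exact: eq_irrelevance.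
Qed.

Definition mkS (v : V) (h : Q v = 1) : X := exist _ v (unit_sum h).

Lemma mkSE v h : sv (@mkS v h) = v. Proof. by []. Qed.

Lemma sdE x y : d x y = acos (dot (sv x) (sv y)).
Proof. by rewrite /sphere_dist dotE. Qed.

Lemma sd_in x y : -1 <= dot (sv x) (sv y) <= 1.
Proof. exact: unit_dot_in (sv_unit x) (sv_unit y). Qed.

Lemma sd_cos x y : cos (d x y) = dot (sv x) (sv y).
Proof. by rewrite sdE acosK // in_itv /= sd_in. Qed.

Lemma sd_ge0 x y : 0 <= d x y. Proof. by rewrite sdE acos_ge0 // sd_in. Qed.
Lemma sd_lepi x y : d x y <= pi. Proof. by rewrite sdE acos_lepi // sd_in. Qed.

Lemma sd_sym x y : d x y = d y x.
Proof. by rewrite !sdE dot_sym. Qed.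

Lemma sd0 x : d x x = 0.
Proof. by rewrite sdE sv_unit acos1. Qed.

Lemma sd_pos x y : x <> y -> 0 < d x y.
Proof.
move=> xy; rewrite sdE acos_gt0 //; have /andP [h1 h2] := sd_in x y.
rewrite h1 /= lt_neqAle h2 andbT; apply/eqP => h; apply: xy; apply: sv_inj.
exact: unit_dot1 (sv_unit x) (sv_unit y) h.
Qed.

Lemma sd_tri x z w : d x w <= d x z + d z w.
Proof.
set A := d x z; set B := d z w.
have A0 : 0 <= A := sd_ge0 x z; have B0 : 0 <= B := sd_ge0 z w.
case: (lerP pi (A + B)) => hAB.
  by have := sd_lepi x w; lra.
have hu : 0 <= A + B <= pi by apply/andP; split; lra.
have hv : 0 <= d x w <= pi by rewrite sd_ge0 sd_lepi.
rewrite -(cos_leE hu hv).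
rewrite sd_cos cosD /A /B !sd_cos !sdE !sin_acos ?sd_in //.
exact: sph_tri_vec (sv_unit x) (sv_unit z) (sv_unit w).
Qed.

Lemma minus_S a b y : mediatrix_minus d a b y <-> 0 < dot (sv a - sv b) (sv y).
Proof.
rewrite /mediatrix_minus /= /dot bfBl -!/(dot _ _) subr_gt0 subr_lt0 !sdE.
by rewrite acos_ltE ?sd_in.
Qed.

Lemma plus_S a b y : mediatrix_plus d a b y <-> dot (sv a - sv b) (sv y) < 0.
Proof.
rewrite (minus_plus d a b) minus_S.
have -> : dot (sv b - sv a) (sv y) = - dot (sv a - sv b) (sv y) by rewrite /dot -bfNl opprB.
lra.
Qed.

Lemma med_S a b x : mediatrix d a b x -> dot (sv a - sv b) (sv x) = 0.
Proof.
rewrite /mediatrix /= !sdE => /acos_inj h.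
rewrite /dot bfBl -!/(dot _ _) !(dot_sym _ (sv x)) h ?sd_in //; ring.
Qed.

Lemma S_step x (h : V) e : h != 0 -> dot h (sv x) = 0 -> 0 < e ->
  exists y, d x y < e /\ exists2 k, 0 < k &
    forall c, dot c (sv x) = 0 -> dot c (sv y) = k * dot c h.
Proof.
move=> h0 hx e0.
set th := Num.min (e / 2) (pi / 2).
have pi0 := pi_gt0 R.
have th0 : 0 < th by rewrite lt_min; apply/andP; split; lra.
have the : th <= e / 2 by rewrite ge_min lexx.
have thp : th <= pi / 2 by rewrite ge_min lexx orbT.
have N0 := nrm_pos h0.
set g := (nrm h)^-1 *: h.
have Qg : Q g = 1.
  rewrite /g /dot !bfE -/(dot h h) mulrA -expr2 exprVn -nrm_sq mulVf //.
  by apply: lt0r_neq0; apply: exprn_gt0.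
have xg : dot (sv x) g = 0 by rewrite /g /dot bfZr -/(dot _ _) dot_sym hx mulr0.
exists (mkS (arc_unit th (sv_unit x) Qg xg)); split.
  rewrite sdE mkSE arc_x ?sv_unit // cosK; first lra.
  by rewrite in_itv /=; apply/andP; split; lra.
exists (sin th / nrm h).
  by apply: divr_gt0 => //; apply: sin_gt0_pi; apply/andP; split; lra.
move=> c hc; rewrite mkSE arc_dotl hc /g /dot bfZr -/(dot c h); ring.
Qed.

Lemma S_adh a b x : a <> b -> mediatrix d a b x -> forall e, 0 < e ->
  exists y, mediatrix_minus d a b y /\ d x y < e.
Proof.
move=> ab Mx e e0.
have u0 : sv a - sv b != 0.
  by rewrite subr_eq0; apply/eqP => h; apply: ab; apply: sv_inj.
have [y [dy [k k0 hk]]] := S_step u0 (med_S Mx) e0.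
exists y; split => //; apply/minus_S; rewrite hk ?med_S //.
by apply: mulr_gt0 => //; apply: dot_gt0.
Qed.


Lemma Fa_pos a b : a <> b -> 0 < dot (sv a - sv b) (sv a).
Proof.
move=> ab; rewrite /dot bfBl -!/(dot _ _) sv_unit.
have /andP [_ h1] := sd_in b a.
case: (ltrP (dot (sv b) (sv a)) 1) => h; first lra.
have h' : dot (sv b) (sv a) = 1 by lra.
by exfalso; apply: ab; apply: sv_inj; symmetry; apply: unit_dot1 (sv_unit b) (sv_unit a) h'.
Qed.

Lemma S_conn a b : a <> b -> mconnected d (mediatrix_minus d a b).
Proof.
move=> ab; apply: (@mconnected_star _ _ d _ a).
  by apply/minus_S; apply: Fa_pos.
move=> y /minus_S My.
have Fa : 0 < dot (sv a - sv b) (sv a) by apply: Fa_pos.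
case: (eqVneq (sv y) (sv a)) => [ya|ya].
  exists (fun=> y); split => //; first exact: sv_inj.
  - by move=> t _; apply/minus_S.
  - by move=> t e _ e0; exists 1 => // s _ _; rewrite sd0.
have hin : -1 < dot (sv y) (sv a) < 1.
  have /andP [h1 h2] := sd_in y a.
  apply/andP; split.
    rewrite lt_neqAle h1 andbT; apply/eqP => h.
    have hya : - sv y = sv a.
      apply: unit_dot1; rewrite ?sv_unit //.
        by rewrite /dot bfNl bfNr opprK -/(dot _ _) sv_unit.
      by rewrite /dot bfNl -/(dot _ _) -h opprK.
    move: My; rewrite -hya /dot !bfE -!/(dot _ _) sv_unit => My.
    have /andP [h3 h4] := sd_in b y; clear hya ab; lra.
  rewrite lt_neqAle h2 andbT; apply/eqP => h.
  by move/eqP: ya; apply; apply: unit_dot1 (sv_unit y) (sv_unit a) h.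
have [Qg yg arcE th0 thpi] := perp_of (sv_unit y) (sv_unit a) hin.
set th := acos (dot (sv y) (sv a)) in Qg yg arcE th0 thpi.
set g := (sin th)^-1 *: (sv a - cos th *: sv y) in Qg yg arcE.
exists (fun t => mkS (arc_unit (t * th) (sv_unit y) Qg yg)); split.
- by apply: sv_inj; rewrite mkSE mul0r arc0.
- by apply: sv_inj; rewrite mkSE mul1r.
- move=> t /andP [t0 t1]; apply/minus_S; rewrite mkSE arc_dotl.
  set F := dot (sv a - sv b) in My Fa *.
  have sth : 0 < sin th by apply: sin_gt0_pi; rewrite th0 thpi.
  have Fg : F g = (sin th)^-1 * (F (sv a) - cos th * F (sv y)).
    by rewrite /F /g /dot !bfE; ring.
  have key : sin th * (cos (t * th) * F (sv y) + sin (t * th) * F g) =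
     sin (th - t * th) * F (sv y) + sin (t * th) * F (sv a).
    rewrite Fg sinB; field; exact: lt0r_neq0.
  have s1 : 0 <= sin (th - t * th) by apply: sin_ge0_pi; apply/andP; split; nra.
  have s2 : 0 <= sin (t * th) by apply: sin_ge0_pi; apply/andP; split; nra.
  have pos : 0 < sin (th - t * th) * F (sv y) + sin (t * th) * F (sv a).
    case: (ltrP t 1) => ht.
      have : 0 < sin (th - t * th) by apply: sin_gt0_pi; apply/andP; split; nra.
      nra.
    have -> : t = 1 by lra.
    by rewrite mul1r subrr sin0 mul0r add0r; apply: mulr_gt0.
  rewrite -key in pos; nra.
- move=> t e /andP [t0 t1] e0.
  have [del0 hdel] := small_t (ltW th0) e0.
  exists (e / (th + 1)) => // s /andP [s0 s1] hs.
  rewrite sdE !mkSE arc_dot ?sv_unit //.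
  have -> : t * th - s * th = (t - s) * th by ring.
  rewrite acos_cos_abs; last first.
    have : `|t - s| <= 1 by rewrite ler_norml; apply/andP; split; lra.
    rewrite -ler_norml => h; rewrite ler_norml.
    have := ler_norml (t - s) 1; nra.
  rewrite normrM (gtr0_norm th0) distrC.
  have := normr_ge0 (s - t); nra.
Qed.

Lemma S_transv o a b : o <> a -> o <> b -> a <> b ->
     forall x, mediatrix d o a x -> mediatrix d o b x -> forall e, 0 < e ->
     forall s1 s2 : bool, exists y, d x y < e /\
       (if s1 then mediatrix_minus d o a y else mediatrix_plus d o a y) /\
       (if s2 then mediatrix_minus d o b y else mediatrix_plus d o b y).
Proof.
move=> oa ob ab x Ma Mb e e0 s1 s2.
set u := sv o - sv a; set v := sv o - sv b.
have svne (p q : X) : p <> q -> sv p != sv q by move=> pq; apply/eqP => h; apply: pq; apply: sv_inj.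
have Dn0 : dot u u * dot v v - dot u v ^+ 2 != 0.
  apply/eqP => D0.
  have v0 : v != 0 by rewrite subr_eq0; apply: svne.
  have W0 := gram_w (fun _ => 1) u v.
  rewrite /= -/(dot u u) -/(dot v v) -/(dot u v) D0 mulr0 in W0.
  have := dot_eq0 W0 => /eqP; rewrite subr_eq0 => /eqP hW.
  have vv0 := dot_gt0 v0.
  have hk : u = (dot u v / dot v v) *: v.
    apply: vecP => i; have := congr1 (fun M : V => M ord0 i) hW; rewrite !mxE => hh.
    apply: (mulfI (lt0r_neq0 vv0)); rewrite -/(dot v v) in hh *.
    rewrite hh; field; exact: lt0r_neq0.
  apply: (@collinear_false _ _ (fun _ => 1) (sv o) (sv a) (sv b) 1 (dot u v / dot v v)).
  - exact: sv_unit.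
  - exact: sv_unit.
  - exact: sv_unit.
  - exact: hk.
  - exact: svne.
  - exact: svne.
  - by move=> h; apply: unit_dot1 (sv_unit o) (sv_unit b) h.
  - exact: svne.
set sg := fun s : bool => if s then 1 else -1 : R.
have [h [hu hv hE]] := gram_solve Dn0 (sg s1) (sg s2).
have h0 : h != 0.
  apply/eqP => h0; move: hu; rewrite h0 bf0l /sg.
  by case: s1 {hE} => /eqP; rewrite eq_sym ?oppr_eq0 oner_eq0.
have xu : dot u (sv x) = 0 by apply: med_S.
have xv : dot v (sv x) = 0 by apply: med_S.
have hx : dot h (sv x) = 0.
  rewrite hE dot_sym; apply: gram_perp; rewrite -/(dot _ _) dot_sym //.
have [y [dy [k k0 hk]]] := S_step h0 hx e0.
exists y; split => //.
have E1 : dot u (sv y) = k * sg s1 by rewrite hk // dot_sym -hu.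
have E2 : dot v (sv y) = k * sg s2 by rewrite hk // dot_sym -hv.
split.
  by case: s1 {hu hE} E1; rewrite /sg => E1; [apply/minus_S|apply/plus_S]; rewrite -/u E1; lra.
by case: s2 {hv hE} E2; rewrite /sg => E2; [apply/minus_S|apply/plus_S]; rewrite -/v E2; lra.
Qed.


Lemma S_mc : (0 < n)%N -> metrically_consistent d.
Proof.
move=> n0 x Rr r r0 rR a; rewrite /msphere /= => xa.
have Rpi : Rr <= pi by rewrite -xa sd_lepi.
have pi0 := pi_gt0 R.
have [g [Qg xg ag]] : exists g, [/\ Q g = 1, dot (sv x) g = 0 & arc (sv x) g Rr = sv a].
  case: (ltrP Rr pi) => hR.
    have hin : -1 < dot (sv x) (sv a) < 1.
      rewrite -sd_cos xa; have /andP [c1 c2] := cos_in Rr.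
      apply/andP; split; rewrite lt_neqAle ?c1 ?c2 andbT.
        apply/eqP => h; have : cos Rr = cos pi by rewrite cospi h.
        move/cos_inj; rewrite !in_itv /= => hh.
        have : Rr = pi by apply: hh; apply/andP; split; lra.
        lra.
      apply/eqP => h; have : cos Rr = cos 0 by rewrite cos0 h.
      move/cos_inj; rewrite !in_itv /= => hh.
      have : Rr = 0 by apply: hh; apply/andP; split; lra.
      lra.
    have [Qg xg aE _ _] := perp_of (sv_unit x) (sv_unit a) hin.
    rewrite -sdE xa in Qg xg aE; by exists ((sin Rr)^-1 *: (sv a - cos Rr *: sv x)).
  have eR : Rr = pi by lra.
  have [g [Qg xg]] := exists_perp (m := n.+1) (x := sv x) (n0 : (1 < n.+1)%N) (sv_unit x).
  exists g; split => //.
  have hxa : dot (sv x) (sv a) = -1 by rewrite -sd_cos xa eR cospi.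
  have ea : - sv x = sv a.
    apply: unit_dot1; rewrite ?sv_unit //.
      by rewrite /dot bfNl bfNr opprK -/(dot _ _) sv_unit.
    by rewrite /dot bfNl -/(dot _ _) hxa opprK.
  by rewrite /arc eR cospi sinpi scale0r addr0 scaleN1r.
have hr : 0 <= r <= pi by apply/andP; split; lra.
set z := mkS (arc_unit r (sv_unit x) Qg xg).
have dxz : d x z = r by rewrite sdE mkSE arc_x ?sv_unit // cosK // in_itv.
have dza : d z a = Rr - r.
  rewrite sdE mkSE -ag arc_dot ?sv_unit // acos_cos_abs.
    by rewrite distrC gtr0_norm; lra.
  by apply/andP; split; lra.
exists z; split; first by rewrite /msphere /= dxz.
split.
  move=> y; rewrite /mball /= dza => hy.
  have := sd_tri x z y; rewrite dxz; lra.
apply/seteqP; split => y /=.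
  move=> [hzy hxy]; rewrite /msphere /= dza in hzy hxy.
  have c1 : dot (sv z) (sv y) = cos (Rr - r) by rewrite -sd_cos hzy.
  have c2 : dot (sv x) (sv y) = cos Rr by rewrite -sd_cos hxy.
  rewrite mkSE dot_sym arc_dotl !(dot_sym (sv y)) c2 cosB in c1.
  have sr : 0 < sin r by apply: sin_gt0_pi; apply/andP; split; lra.
  have gy : dot g (sv y) = sin Rr.
    apply: (mulfI (lt0r_neq0 sr)); lra.
  apply: sv_inj; apply: unit_dot1; rewrite ?sv_unit //.
  rewrite -ag arc_dotl !(dot_sym (sv y)) c2 gy -!expr2 addrC sin2cos2; ring.
by move=> ->; split.
Qed.

Theorem sphere_brillouin : (0 < n)%N -> Brillouin d.
Proof.
move=> n0; apply: (Brillouin_of sd_sym sd_tri sd0 sd_pos).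
- exact: S_mc.
- exact: S_conn.
- by move=> a b x ab; apply: S_adh.
- exact: S_transv.
Qed.

End Sphere.


Section Hyp.
Variable R : realType.
Implicit Types s t u v : R.

Definition ch t : R := (expR t + expR (- t)) / 2.
Definition sh t : R := (expR t - expR (- t)) / 2.

Lemma eN t : expR (- t) = (expR t)^-1 :> R. Proof. exact: expRN. Qed.
Lemma e0 t : expR t != 0 :> R. Proof. by apply: lt0r_neq0; apply: expR_gt0. Qed.

Lemma ch2sh2 t : ch t ^+ 2 - sh t ^+ 2 = 1.
Proof. by rewrite /ch /sh eN; field; apply: e0. Qed.

Lemma chB s t : ch (s - t) = ch s * ch t - sh s * sh t.
Proof. by rewrite /ch /sh !eN !expRB; field; rewrite ?e0. Qed.

Lemma shB s t : sh (s - t) = sh s * ch t - ch s * sh t.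
Proof. by rewrite /ch /sh !eN !expRB; field; rewrite ?e0. Qed.

Lemma chD s t : ch (s + t) = ch s * ch t + sh s * sh t.
Proof. by rewrite /ch /sh !eN !expRD; field; rewrite ?e0. Qed.

Lemma chN t : ch (- t) = ch t.
Proof. by rewrite /ch opprK addrC. Qed.

Lemma ch0 : ch 0 = 1.
Proof. by rewrite /ch oppr0 expR0; field. Qed.

Lemma sh0 : sh 0 = 0.
Proof. by rewrite /sh oppr0 expR0 subrr mul0r. Qed.

Lemma chsh t : ch t + sh t = expR t.
Proof. by rewrite /ch /sh; field. Qed.

Lemma sh_gt0 t : 0 < t -> 0 < sh t.
Proof.
move=> t0; rewrite /sh; apply: divr_gt0 => //; rewrite subr_gt0 ltr_expR; lra.
Qed.

Lemma sh_ge0 t : 0 <= t -> 0 <= sh t.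
Proof. by rewrite le_eqVlt => /orP [/eqP <-|/sh_gt0/ltW //]; rewrite sh0. Qed.

Lemma ch_ltE u v : 0 <= u -> 0 <= v -> (ch u < ch v) = (u < v).
Proof.
move=> u0 v0.
have key : ch v - ch u = (expR v - expR u) * (1 - (expR u * expR v)^-1) / 2.
  by rewrite /ch !eN; field; rewrite !e0.
have P : 0 < 1 - (expR u * expR v)^-1 \/ (u = 0 /\ v = 0).
  case: (ltrP 0 (u + v)) => h; last by right; lra.
  left; rewrite subr_gt0 -expRD invf_lt1; last exact: expR_gt0.
  by rewrite expR_gt1.
case: P => [P|[-> ->]]; last by rewrite !ltxx.
set P' := 1 - _ in key P.
apply/idP/idP => h.
  move: h; rewrite -subr_gt0 key => h.
  have : 0 < expR v - expR u by nra.
  by rewrite subr_gt0 ltr_expR.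
have : 0 < expR v - expR u by rewrite subr_gt0 ltr_expR.
move=> hh; rewrite -subr_gt0 key; nra.
Qed.

Lemma ch_ge1 t : 1 <= ch t.
Proof.
have : 0 <= (expR t - 1) ^+ 2 / (2 * expR t).
  by apply: divr_ge0; [apply: sqr_ge0| apply: mulr_ge0 => //; apply: expR_ge0].
have -> : (expR t - 1) ^+ 2 / (2 * expR t) = ch t - 1.
  by rewrite /ch eN; field; rewrite e0.
lra.
Qed.

Lemma sh_sqrt t : 0 <= t -> sh t = Num.sqrt (ch t ^+ 2 - 1).
Proof.
move=> t0; have := ch2sh2 t => h.
have -> : ch t ^+ 2 - 1 = sh t ^+ 2 by lra.
by rewrite sqrtr_sqr ger0_norm // sh_ge0.
Qed.

Lemma arcosh_ch t : 0 <= t -> arcosh (ch t) = t.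
Proof. by move=> t0; rewrite /arcosh -sh_sqrt // chsh expRK. Qed.

Lemma ch_arcosh s : 1 <= s -> ch (arcosh s) = s.
Proof.
move=> s1; rewrite /arcosh.
set q := Num.sqrt (s ^+ 2 - 1).
have q0 : 0 <= q := sqrtr_ge0 _.
have q2 : q ^+ 2 = s ^+ 2 - 1 by rewrite sqr_sqrtr //; nra.
have sq : 0 < s + q by lra.
rewrite /ch eN lnK; last by rewrite posrE.
have inv : (s + q)^-1 = s - q.
  apply: (@mulfI _ (s + q)); first exact: lt0r_neq0.
  rewrite mulfV; [nra | exact: lt0r_neq0].
by rewrite inv; field.
Qed.

Lemma arcosh_ge0 s : 1 <= s -> 0 <= arcosh s.
Proof.
move=> s1; rewrite /arcosh; apply: ln_ge0.
have := sqrtr_ge0 (s ^+ 2 - 1); lra.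
Qed.

Lemma arcosh_ltE s t : 1 <= s -> 1 <= t -> (arcosh s < arcosh t) = (s < t).
Proof.
move=> s1 t1; rewrite -ch_ltE ?arcosh_ge0 //.
by rewrite !ch_arcosh.
Qed.

Lemma arcosh_leE s t : 1 <= s -> 1 <= t -> (arcosh s <= arcosh t) = (s <= t).
Proof. by move=> s1 t1; rewrite !leNgt arcosh_ltE. Qed.

Lemma arcosh_inj s t : 1 <= s -> 1 <= t -> arcosh s = arcosh t -> s = t.
Proof. by move=> s1 t1 h; rewrite -(ch_arcosh s1) -(ch_arcosh t1) h. Qed.

Lemma arcosh_ch_abs u : arcosh (ch u) = `|u|.
Proof.
case: (lerP 0 u) => h; first by rewrite ger0_norm // arcosh_ch.
by rewrite ltr0_norm // -chN arcosh_ch //; lra.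
Qed.

Lemma ch_gt1 t : 0 < t -> 1 < ch t.
Proof. by move=> t0; rewrite -ch0 ch_ltE //; lra. Qed.

End Hyp.

Section LorVec.
Variables (R : realType) (n : nat).
Local Notation V := 'rV[R]_n.+1.
Definition lw : 'I_n.+1 -> R := fun i => if i == ord0 then -1 else 1.
Definition sw : 'I_n.+1 -> R := fun i => if i == ord0 then 0 else 1.
Local Notation L := (bf lw).
Local Notation S := (bf sw).
Implicit Types x y z w g h u v p q c a : V.

Lemma lorentzE u v : lorentz u v = L u v.
Proof.
rewrite /lorentz /bf [in RHS](bigD1 ord0) //= /lw eqxx mulN1r; congr (_ + _).
by apply: eq_bigr => i /negbTE ->; rewrite mul1r.
Qed.

Lemma L_split u v : L u v = - (u ord0 ord0 * v ord0 ord0) + S u v.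
Proof.
rewrite /bf [in LHS](bigD1 ord0) //= [in RHS](bigD1 ord0) //=.
rewrite /lw /sw eqxx mulN1r mul0r add0r; congr (_ + _).
by apply: eq_bigr => i /negbTE ->.
Qed.

Lemma S_ge0 v : 0 <= S v v.
Proof.
apply: sumr_ge0 => i _; rewrite /sw; case: (i == ord0); rewrite ?mul0r // mul1r.
by rewrite -expr2 sqr_ge0.
Qed.

Lemma S_CS u v : S u v ^+ 2 <= S u u * S v v.
Proof.
apply: quad_CS; first exact: S_ge0.
move=> t; have := S_ge0 (u + t *: v); rewrite !bfE (bfC _ v u); lra.
Qed.

Lemma S_eq0 v : S v v = 0 -> forall i, i != ord0 -> v ord0 i = 0.
Proof.
move=> h i i0.
have hF : forall j, predT j -> 0 <= sw j * (v ord0 j * v ord0 j).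
  move=> j _; rewrite /sw; case: (j == ord0); rewrite ?mul0r // mul1r.
  by rewrite -expr2 sqr_ge0.
have := psumr_eq0P hF h (isT : predT i).
by rewrite /sw (negbTE i0) mul1r => /eqP; rewrite mulf_eq0 orbb => /eqP.
Qed.

Lemma L_psd z v : L z z < 0 -> L z v = 0 -> 0 <= L v v /\ (L v v = 0 -> v = 0).
Proof.
move=> hz hzv.
rewrite !L_split in hz hzv *.
set z0 := z ord0 ord0 in hz hzv *; set v0 := v ord0 ord0 in hzv *.
have cs := S_CS z v.
have Sz := S_ge0 z; have Sv := S_ge0 v.
have e : S z v = z0 * v0 by lra.
rewrite e in cs.
have key : v0 ^+ 2 <= S v v.
  case: (lerP (v0 ^+ 2) (S v v)) => // hv.
  have : z0 ^+ 2 * v0 ^+ 2 <= S z z * v0 ^+ 2.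
    have : S z z * S v v <= S z z * v0 ^+ 2 by apply: ler_wpM2l => //; lra.
    rewrite -exprMn; lra.
  have : S z z * v0 ^+ 2 < z0 ^+ 2 * v0 ^+ 2.
    have : 0 < v0 ^+ 2 by lra.
    have : S z z < z0 ^+ 2 by rewrite expr2; lra.
    nra.
  lra.
split; first by rewrite -expr2; lra.
move=> h0.
have vv : S v v = v0 ^+ 2 by rewrite -expr2 in h0; lra.
have v00 : v0 = 0.
  have : z0 ^+ 2 * v0 ^+ 2 <= S z z * v0 ^+ 2 by rewrite -exprMn -vv.
  move=> hh; apply/eqP; rewrite -sqrf_eq0; apply/eqP.
  have := sqr_ge0 v0; rewrite -expr2 in hz; nra.
apply: vecP => i; rewrite mxE; case: (eqVneq i ord0) => [->|i0]; first exact: v00.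
by apply: S_eq0 i0; rewrite vv v00 expr0n.
Qed.

Lemma L_CS_perp z p q : L z z < 0 -> L z p = 0 -> L z q = 0 ->
  L p q ^+ 2 <= L p p * L q q.
Proof.
move=> hz hp hq; apply: quad_CS; first exact: (L_psd hz hq).1.
move=> t; have hp' : L z (p + t *: q) = 0 by rewrite !bfE hp hq; ring.
have := (L_psd hz hp').1; rewrite !bfE (bfC _ q p); lra.
Qed.

Definition hypv x := L x x = -1 /\ 0 < x ord0 ord0.

Lemma L_neg x y : hypv x -> hypv y -> L x y < 0.
Proof.
move=> [hx x0] [hy y0].
rewrite L_split; rewrite L_split in hx; rewrite L_split in hy.
have cs := S_CS x y.
set a := x ord0 ord0 in x0 hx *; set b := y ord0 ord0 in y0 hy *.
have Sx : S x x = a ^+ 2 - 1 by rewrite expr2; lra.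
have Sy : S y y = b ^+ 2 - 1 by rewrite expr2; lra.
rewrite Sx Sy in cs.
have ab : 0 < a * b by apply: mulr_gt0.
case: (ltrP (S x y) (a * b)) => h; first lra.
have : (a * b) ^+ 2 <= S x y ^+ 2.
  rewrite !expr2; apply: ler_pM => //; lra.
have := S_ge0 x; have := S_ge0 y; rewrite Sx Sy exprMn; nra.
Qed.

Lemma L_le_m1 x y : hypv x -> hypv y -> L x y <= -1 /\ (L x y = -1 -> x = y).
Proof.
move=> hx hy; have neg := L_neg hx hy.
case: (hx) => hxx x0.
case: (hy) => hyy y0.
set w := y + L x y *: x.
have xw : L x w = 0 by rewrite /w !bfE hxx; ring.
have ww : L w w = L x y ^+ 2 - 1.
  by rewrite /w !bfE hxx hyy (bfC _ y x); ring.
have xx0 : L x x < 0 by rewrite hxx; lra.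
have [ps eq0] := L_psd xx0 xw.
rewrite ww in ps eq0; split; first nra.
move=> h1; have h2 : L x y ^+ 2 - 1 = 0 by rewrite h1; ring.
have := eq0 h2.
rewrite /w h1 scaleN1r => /eqP; rewrite subr_eq0 => /eqP ->. done.
Qed.

Lemma future_of x y : hypv x -> L y y = -1 -> L x y < 0 -> 0 < y ord0 ord0.
Proof.
move=> hx hy hxy.
have y2 : 1 <= y ord0 ord0 ^+ 2.
  have := S_ge0 y; move: hy; rewrite L_split expr2; lra.
case: (ltrP 0 (y ord0 ord0)) => // h.
have hy' : hypv (- y).
  split; first by rewrite bfNl bfNr opprK.
  rewrite mxE oppr_gt0 lt_neqAle h andbT; apply/eqP => h0.
  by move: y2; rewrite h0 expr0n /=; lra.
have := L_neg hx hy'; rewrite bfNr; lra.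
Qed.

Definition harc x g t : V := ch t *: x + sh t *: g.

Lemma harc_dot x g s t : L x x = -1 -> L g g = 1 -> L x g = 0 ->
  L (harc x g s) (harc x g t) = - ch (s - t).
Proof.
move=> hx hg hxg; rewrite /harc !bfE hx hg hxg (bfC _ g x) hxg chB; ring.
Qed.

Lemma harc_dotl x g c t : L c (harc x g t) = ch t * L c x + sh t * L c g.
Proof. by rewrite /harc !bfE. Qed.

Lemma harc_hyp x g t : hypv x -> L g g = 1 -> L x g = 0 -> hypv (harc x g t).
Proof.
move=> hx hg hxg; have hh : L (harc x g t) (harc x g t) = -1.
  by rewrite harc_dot ?hx.1 // subrr ch0.
split => //; apply: (future_of hx hh).
rewrite harc_dotl hx.1 hxg; have := ch_ge1 t; lra.
Qed.

Lemma harc0 x g : harc x g 0 = x.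
Proof. by rewrite /harc ch0 sh0 scale1r scale0r addr0. Qed.

Lemma hperp_of x a : hypv x -> hypv a -> x <> a ->
  let th := arcosh (- L x a) in let g := (sh th)^-1 *: (a - ch th *: x) in
  [/\ L g g = 1, L x g = 0, harc x g th = a & 0 < th].
Proof.
move=> hx ha xa th g.
have [le1 eq1] := L_le_m1 hx ha.
have gt1 : 1 < - L x a.
  case: (ltrP (L x a) (-1)) => h; first lra.
  by exfalso; apply: xa; apply: eq1; lra.
have cth : ch th = - L x a by rewrite /th ch_arcosh //; lra.
have th0 : 0 < th by rewrite -(ch_ltE (le_refl 0)) ?ch0 ?cth // /th arcosh_ge0 //; lra.
have sth : 0 < sh th by apply: sh_gt0.
have s2 : sh th ^+ 2 = L x a ^+ 2 - 1 by have := ch2sh2 th; rewrite cth; lra.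
have sn0 : sh th != 0 by apply: lt0r_neq0.
split => //.
- rewrite /g !bfE hx.1 ha.1 cth (bfC _ a x).
  have key : forall A B, A + B = sh th ^+ 2 -> (sh th)^-1 * ((sh th)^-1 * A + (sh th)^-1 * B) = 1.
    by move=> A B hAB; rewrite -mulrDr hAB; field.
  by apply: key; rewrite s2; ring.
- by rewrite /g !bfE hx.1 cth; field.
- apply: vecP => i; rewrite /harc /g !mxE; field => //.
Qed.

End LorVec.

Section HypVec2.
Variables (R : realType) (n : nat).
Local Notation V := 'rV[R]_n.+1.
Local Notation L := (bf (@lw R n)).

Lemma hyp_tri_vec (x z w : V) : hypv x -> hypv z -> hypv w ->
  - L x w <= (- L x z) * (- L z w) +
     Num.sqrt ((- L x z) ^+ 2 - 1) * Num.sqrt ((- L z w) ^+ 2 - 1).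
Proof.
move=> [hx _] [hz _] [hw _].
set p := x + L x z *: z; set q := w + L z w *: z.
have zz : L z z < 0 by rewrite hz; lra.
have zp : L z p = 0 by rewrite /p !bfE hz (bfC _ z x); ring.
have zq : L z q = 0 by rewrite /q !bfE hz; ring.
have pp : L p p = L x z ^+ 2 - 1 by rewrite /p !bfE hz hx (bfC _ z x); ring.
have qq : L q q = L z w ^+ 2 - 1 by rewrite /q !bfE hz hw (bfC _ w z); ring.
have hpp : L p p = L x z ^+ 2 - 1 by rewrite /p !bfE hz hx (bfC _ z x); ring.
have hqq : L q q = L z w ^+ 2 - 1 by rewrite /q !bfE hz hw (bfC _ w z); ring.
have hpq : L p q = L x w + L x z * L z w by rewrite /p /q !bfE hz ; ring.
have cs := L_CS_perp zz zp zq.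
rewrite hpp hqq hpq in cs.
have p0 := (L_psd zz zp).1; have q0 := (L_psd zz zq).1.
rewrite hpp in p0; rewrite hqq in q0.
set sA := Num.sqrt ((- L x z) ^+ 2 - 1); set sB := Num.sqrt ((- L z w) ^+ 2 - 1).
have sA2 : sA ^+ 2 = L x z ^+ 2 - 1 by rewrite sqr_sqrtr sqrrN //.
have sB2 : sB ^+ 2 = L z w ^+ 2 - 1 by rewrite sqr_sqrtr sqrrN //.
have sA0 : 0 <= sA := sqrtr_ge0 _.
have sB0 : 0 <= sB := sqrtr_ge0 _.
have : (L x w + L x z * L z w) ^+ 2 <= (sA * sB) ^+ 2 by rewrite exprMn sA2 sB2.
have := mulr_ge0 sA0 sB0.
set P := sA * sB; set C := L x w + L x z * L z w.
move=> hP hC.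
have : - C <= P.
  case: (lerP (- C) P) => // h; have : P ^+ 2 < C ^+ 2.
    rewrite -(sqrrN C) !expr2; apply: ltr_pM; lra.
  lra.
rewrite /C; lra.
Qed.

End HypVec2.

Section Hyperbolic.
Variables (R : realType) (n : nat).
Local Notation X := (hyp_pt R n).
Local Notation V := 'rV[R]_n.+1.
Local Notation d := (@hyp_dist R n).
Local Notation L := (bf (@lw R n)).
Implicit Types x y z w a b o : X.

Definition hv (x : X) : V := proj1_sig x.

Lemma hv_hyp x : hypv (hv x).
Proof. by case: x => v [h1 h2]; split => //=; rewrite -lorentzE. Qed.

Lemma hv_inj x y : hv x = hv y -> x = y.
Proof.
case: x => x hx; case: y => y hy /= e; subst y; congr exist.
exact: Prop_irrelevance.
Qed.

Lemma hypv_def (v : V) : hypv v -> lorentz v v = -1 /\ 0 < v ord0 ord0.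
Proof. by rewrite lorentzE. Qed.

Definition mkH (v : V) (h : hypv v) : X := exist _ v (hypv_def h).

Lemma mkHE v h : hv (@mkH v h) = v. Proof. by []. Qed.

Lemma hdE x y : d x y = arcosh (- L (hv x) (hv y)).
Proof. by rewrite /hyp_dist lorentzE. Qed.

Lemma hd_ge1 x y : 1 <= - L (hv x) (hv y).
Proof. by have [h _] := L_le_m1 (hv_hyp x) (hv_hyp y); lra. Qed.

Lemma hd_ch x y : ch (d x y) = - L (hv x) (hv y).
Proof. by rewrite hdE ch_arcosh // hd_ge1. Qed.

Lemma hd_ge0 x y : 0 <= d x y.
Proof. by rewrite hdE arcosh_ge0 // hd_ge1. Qed.

Lemma hd_sym x y : d x y = d y x.
Proof. by rewrite !hdE bfC. Qed.

Lemma hd0 x : d x x = 0.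
Proof. by rewrite hdE (hv_hyp x).1 opprK -ch0 arcosh_ch. Qed.

Lemma hd_pos x y : x <> y -> 0 < d x y.
Proof.
move=> xy; have [h1 h2] := L_le_m1 (hv_hyp x) (hv_hyp y).
have gt : 1 < - L (hv x) (hv y).
  case: (ltrP (L (hv x) (hv y)) (-1)) => h; first lra.
  by exfalso; apply: xy; apply: hv_inj; apply: h2; lra.
rewrite -(arcosh_ch (le_refl (0 : R))) ch0 hdE arcosh_ltE //; lra.
Qed.

Lemma hd_tri x z w : d x w <= d x z + d z w.
Proof.
have A0 := hd_ge0 x z; have B0 := hd_ge0 z w.
rewrite -(arcosh_ch (addr_ge0 A0 B0)) hdE arcosh_leE ?hd_ge1 ?ch_ge1 //.
rewrite chD !hd_ch !sh_sqrt // !hd_ch.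
exact: hyp_tri_vec (hv_hyp x) (hv_hyp z) (hv_hyp w).
Qed.

Lemma minus_H a b y : mediatrix_minus d a b y <-> 0 < L (hv a - hv b) (hv y).
Proof.
rewrite /mediatrix_minus /= bfBl subr_gt0 subr_lt0 !hdE.
by rewrite arcosh_ltE ?hd_ge1 // ltrN2.
Qed.

Lemma plus_H a b y : mediatrix_plus d a b y <-> L (hv a - hv b) (hv y) < 0.
Proof.
rewrite (minus_plus d a b) minus_H.
have -> : L (hv b - hv a) (hv y) = - L (hv a - hv b) (hv y) by rewrite -bfNl opprB.
lra.
Qed.

Lemma med_H a b x : mediatrix d a b x -> L (hv a - hv b) (hv x) = 0.
Proof.
rewrite /mediatrix /= !hdE => /arcosh_inj h.
rewrite bfBl !(bfC _ _ (hv x)); have := h (hd_ge1 _ _) (hd_ge1 _ _); lra.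
Qed.

Lemma perp_pos x (h : V) : h != 0 -> L h (hv x) = 0 -> 0 < L h h.
Proof.
move=> h0 hx; have xx : L (hv x) (hv x) < 0 by rewrite (hv_hyp x).1; lra.
have xh : L (hv x) h = 0 by rewrite bfC.
have [p1 p2] := L_psd xx xh.
rewrite lt_neqAle p1 andbT eq_sym; apply/eqP => /p2 h00; by rewrite h00 eqxx in h0.
Qed.

Lemma H_step x (h : V) e : h != 0 -> L h (hv x) = 0 -> 0 < e ->
  exists y, d x y < e /\ exists2 k, 0 < k &
    forall c, L c (hv x) = 0 -> L c (hv y) = k * L c h.
Proof.
move=> h0 hx e0.
have hh := perp_pos h0 hx.
set g := (Num.sqrt (L h h))^-1 *: h.
have sq0 : 0 < Num.sqrt (L h h) by rewrite sqrtr_gt0.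
have Lg : L g g = 1.
  rewrite /g !bfE mulrA -expr2 exprVn sqr_sqrtr; last exact: ltW.
  by rewrite mulVf //; apply: lt0r_neq0.
have xg : L (hv x) g = 0 by rewrite /g bfZr bfC hx mulr0.
have th0 : 0 < e / 2 by lra.
exists (mkH (harc_hyp (e / 2) (hv_hyp x) Lg xg)); split.
  rewrite hdE mkHE harc_dotl (hv_hyp x).1 xg mulr0 addr0 mulrN1 opprK arcosh_ch; lra.
exists (sh (e / 2) / Num.sqrt (L h h)).
  by apply: divr_gt0 => //; apply: sh_gt0.
move=> c hc; rewrite mkHE harc_dotl hc /g bfZr; ring.
Qed.

Lemma H_adh a b x : a <> b -> mediatrix d a b x -> forall e, 0 < e ->
  exists y, mediatrix_minus d a b y /\ d x y < e.
Proof.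
move=> ab Mx e e0.
have u0 : hv a - hv b != 0.
  by rewrite subr_eq0; apply/eqP => h; apply: ab; apply: hv_inj.
have [y [dy [k k0 hk]]] := H_step u0 (med_H Mx) e0.
exists y; split => //; apply/minus_H; rewrite hk ?med_H //.
by apply: mulr_gt0 => //; apply: (perp_pos u0 (med_H Mx)).
Qed.


Lemma Fa_posH a b : a <> b -> 0 < L (hv a - hv b) (hv a).
Proof.
move=> ab; rewrite bfBl (hv_hyp a).1.
have [h1 h2] := L_le_m1 (hv_hyp b) (hv_hyp a).
case: (ltrP (L (hv b) (hv a)) (-1)) => h; first lra.
have h' : L (hv b) (hv a) = -1 by lra.
by exfalso; apply: ab; apply: hv_inj; symmetry; apply: h2.
Qed.

Lemma H_conn a b : a <> b -> mconnected d (mediatrix_minus d a b).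
Proof.
move=> ab; apply: (@mconnected_star _ _ d _ a).
  by apply/minus_H; apply: Fa_posH.
move=> y /minus_H My.
have Fa : 0 < L (hv a - hv b) (hv a) by apply: Fa_posH.
case: (eqVneq (hv y) (hv a)) => [ya|ya].
  exists (fun=> y); split => //; first exact: hv_inj.
  - by move=> t _; apply/minus_H.
  - by move=> t e _ e0; exists 1 => // s _ _; rewrite hd0.
have ya' : hv y <> hv a by apply/eqP.
have [Qg yg arcE th0] := hperp_of (hv_hyp y) (hv_hyp a) ya'.
set th := arcosh (- L (hv y) (hv a)) in Qg yg arcE th0.
set g := (sh th)^-1 *: (hv a - ch th *: hv y) in Qg yg arcE.
exists (fun t => mkH (harc_hyp (t * th) (hv_hyp y) Qg yg)); split.
- by apply: hv_inj; rewrite mkHE mul0r harc0.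
- by apply: hv_inj; rewrite mkHE mul1r.
- move=> t /andP [t0 t1]; apply/minus_H; rewrite mkHE harc_dotl.
  set F := L (hv a - hv b) in My Fa *.
  have sth : 0 < sh th by apply: sh_gt0.
  have Fg : F g = (sh th)^-1 * (F (hv a) - ch th * F (hv y)).
    by rewrite /F /g !bfE; ring.
  have key : sh th * (ch (t * th) * F (hv y) + sh (t * th) * F g) =
     sh (th - t * th) * F (hv y) + sh (t * th) * F (hv a).
    rewrite Fg shB; field; exact: lt0r_neq0.
  have s1 : 0 <= sh (th - t * th) by apply: sh_ge0; nra.
  have s2 : 0 <= sh (t * th) by apply: sh_ge0; nra.
  have pos : 0 < sh (th - t * th) * F (hv y) + sh (t * th) * F (hv a).
    case: (ltrP t 1) => ht.
      have : 0 < sh (th - t * th) by apply: sh_gt0; nra.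
      nra.
    have -> : t = 1 by lra.
    by rewrite mul1r subrr sh0 mul0r add0r; apply: mulr_gt0.
  rewrite -key in pos; nra.
- move=> t e /andP [t0 t1] e0.
  have [del0 hdel] := small_t (ltW th0) e0.
  exists (e / (th + 1)) => // s /andP [s0 s1] hs.
  rewrite hdE !mkHE harc_dot ?(hv_hyp y).1 // opprK.
  have -> : t * th - s * th = (t - s) * th by ring.
  rewrite arcosh_ch_abs normrM (gtr0_norm th0) distrC.
  have := normr_ge0 (s - t); nra.
Qed.

Lemma H_transv o a b : o <> a -> o <> b -> a <> b ->
     forall x, mediatrix d o a x -> mediatrix d o b x -> forall e, 0 < e ->
     forall s1 s2 : bool, exists y, d x y < e /\
       (if s1 then mediatrix_minus d o a y else mediatrix_plus d o a y) /\
       (if s2 then mediatrix_minus d o b y else mediatrix_plus d o b y).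
Proof.
move=> oa ob ab x Ma Mb e e0 s1 s2.
set u := hv o - hv a; set v := hv o - hv b.
have svne (p q : X) : p <> q -> hv p != hv q by move=> pq; apply/eqP => h; apply: pq; apply: hv_inj.
have xu : L u (hv x) = 0 by apply: med_H.
have xv : L v (hv x) = 0 by apply: med_H.
have xx : L (hv x) (hv x) < 0 by rewrite (hv_hyp x).1; lra.
have Dn0 : L u u * L v v - L u v ^+ 2 != 0.
  apply/eqP => D0.
  have v0 : v != 0 by rewrite subr_eq0; apply: svne.
  have W0 := gram_w (@lw R n) u v.
  rewrite /= D0 mulr0 in W0.
  have xW : L (hv x) (L v v *: u - L u v *: v) = 0.
    have xu2 : L (hv x) u = 0 by rewrite bfC.
    have xv2 : L (hv x) v = 0 by rewrite bfC.
    by rewrite bfBr !bfZr xu2 xv2; ring.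
  have := (L_psd xx xW).2 W0 => /eqP; rewrite subr_eq0 => /eqP hW.
  have vv0 := perp_pos v0 xv.
  have hk : u = (L u v / L v v) *: v.
    apply: vecP => i; have := congr1 (fun M : V => M ord0 i) hW; rewrite !mxE => hh.
    apply: (mulfI (lt0r_neq0 vv0)).
    rewrite hh; field; exact: lt0r_neq0.
  apply: (@collinear_false _ _ (@lw R n) (hv o) (hv a) (hv b) (-1) (L u v / L v v)).
  - exact: (hv_hyp o).1.
  - exact: (hv_hyp a).1.
  - exact: (hv_hyp b).1.
  - exact: hk.
  - exact: svne.
  - exact: svne.
  - by move=> h; apply: (L_le_m1 (hv_hyp o) (hv_hyp b)).2.
  - exact: svne.
set sg := fun s : bool => if s then 1 else -1 : R.
have [h [hU hV hE]] := gram_solve Dn0 (sg s1) (sg s2).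
have h0 : h != 0.
  apply/eqP => h0; move: hU; rewrite h0 bf0l /sg.
  by case: s1 {hE} => /eqP; rewrite eq_sym ?oppr_eq0 oner_eq0.
have hx : L h (hv x) = 0.
  rewrite hE bfC; apply: gram_perp; rewrite bfC //.
have [y [dy [k k0 hk]]] := H_step h0 hx e0.
exists y; split => //.
have E1 : L u (hv y) = k * sg s1 by rewrite hk // bfC -hU.
have E2 : L v (hv y) = k * sg s2 by rewrite hk // bfC -hV.
split.
  by case: s1 {hU hE} E1; rewrite /sg => E1; [apply/minus_H|apply/plus_H]; rewrite -/u E1; lra.
by case: s2 {hV hE} E2; rewrite /sg => E2; [apply/minus_H|apply/plus_H]; rewrite -/v E2; lra.
Qed.

Lemma H_mc : metrically_consistent d.
Proof.
move=> x Rr r r0 rR a; rewrite /msphere /= => xa.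
have R0 : 0 < Rr by lra.
have xa' : hv x <> hv a.
  move=> h; have : x = a by apply: hv_inj.
  by move=> e; rewrite e hd0 in xa; lra.
have [Qg xg ag _] := hperp_of (hv_hyp x) (hv_hyp a) xa'.
rewrite -hdE xa in Qg xg ag.
set g := (sh Rr)^-1 *: (hv a - ch Rr *: hv x) in Qg xg ag.
set z := mkH (harc_hyp r (hv_hyp x) Qg xg).
have dxz : d x z = r.
  rewrite hdE mkHE harc_dotl (hv_hyp x).1 xg mulr0 addr0 mulrN1 opprK arcosh_ch //; lra.
have dza : d z a = Rr - r.
  rewrite hdE mkHE -ag harc_dot ?(hv_hyp x).1 // opprK arcosh_ch_abs.
  by rewrite distrC gtr0_norm; lra.
exists z; split; first by rewrite /msphere /= dxz.
split.
  move=> y; rewrite /mball /= dza => hy.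
  have := hd_tri x z y; rewrite dxz; lra.
apply/seteqP; split => y /=.
  move=> [hzy hxy]; rewrite /msphere /= dza in hzy hxy.
  have c1 : L (hv y) (hv z) = - ch (Rr - r) by rewrite bfC -[L _ _]opprK -hd_ch hzy.
  have c2 : L (hv y) (hv x) = - ch Rr by rewrite bfC -[L _ _]opprK -hd_ch hxy.
  rewrite mkHE harc_dotl c2 chB in c1.
  have sr : 0 < sh r by apply: sh_gt0.
  have gy : L (hv y) g = sh Rr.
    apply: (mulfI (lt0r_neq0 sr)); lra.
  apply: hv_inj; apply: (L_le_m1 (hv_hyp y) (hv_hyp a)).2.
  rewrite -ag harc_dotl c2 gy; have := ch2sh2 Rr; rewrite !expr2; lra.
by move=> ->; split.
Qed.

Theorem hyp_brillouin : Brillouin d.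
Proof.
apply: (Brillouin_of hd_sym hd_tri hd0 hd_pos).
- exact: H_mc.
- exact: H_conn.
- by move=> a b x ab; apply: H_adh.
- exact: H_transv.
Qed.

End Hyperbolic.


Theorem mainTheorem8 (R : realType) (n : nat) :
  Brillouin (@euclid_dist R n) /\
  ((0 < n)%N -> Brillouin (@sphere_dist R n)) /\
  Brillouin (@hyp_dist R n).
Proof.
split; first exact: euclid_brillouin.
split; first exact: sphere_brillouin.
exact: hyp_brillouin.
Qed.
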